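(* Let $P_0$ be a poset such that for each natural number $n$ there exists a poset $P_n$ with $P_0\cong\mathrm{id}^n(P_n)$. Then $P_0$ has ascending chain condition.
   Context: For a poset $P$, an ideal of $P$ is an upward directed downset of $P$ (downset: $x\le y\in d\Rightarrow x\in d$; upward directed: every two elements have a common upper bound in the set). $\mathrm{id}(P)$ is the set of nonempty ideals of $P$ ordered by inclusion, and $\mathrm{id}^n$ denotes the $n$-fold iterate of this construction ($\mathrm{id}^0(P)=P$). *)

(* Defs.v *)
From Stdlib Require Import Arith FunctionalExtensionality PropExtensionality ProofIrrelevance.

Record Poset := {
  carrier :> Type;
  le : carrier -> carrier -> Prop;
  le_refl : forall x, le x x;
  le_trans : forall x y z, le x y -> le y z -> le x z;
  le_antisym : forall x y, le x y -> le y x -> x = y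
}.

Arguments le {p} _ _.

Definition is_ideal (P : Poset) (d : P -> Prop) : Prop :=
  (exists x, d x) /\
  (forall x y : P, le x y -> d y -> d x) /\
  (forall x y : P, d x -> d y -> exists z, d z /\ le x z /\ le y z).

Definition ideal_le (P : Poset) (d e : {d : P -> Prop | is_ideal P d}) : Prop :=
  forall x, proj1_sig d x -> proj1_sig e x.

Lemma ideal_le_antisym (P : Poset) (d e : {d : P -> Prop | is_ideal P d}) :
  ideal_le P d e -> ideal_le P e d -> d = e.
Proof.
  destruct d as [d Hd], e as [e He]; unfold ideal_le; simpl; intros H1 H2.
  assert (d = e) as ->.
  { apply functional_extensionality; intro x;
    apply propositional_extensionality; split; auto. }
  f_equal; apply proof_irrelevance.
Qed.

Definition idP (P : Poset) : Poset := {|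
  carrier := {d : P -> Prop | is_ideal P d};
  le := ideal_le P;
  le_refl := fun d x h => h;
  le_trans := fun d e f h1 h2 x h => h2 x (h1 x h);
  le_antisym := ideal_le_antisym P
|}.

Fixpoint id_iter (n : nat) (P : Poset) : Poset :=
  match n with
  | 0 => P
  | S m => idP (id_iter m P)
  end.

Definition order_iso (P Q : Poset) : Prop :=
  exists (f : P -> Q) (g : Q -> P),
    (forall x, g (f x) = x) /\ (forall y, f (g y) = y) /\
    (forall x y : P, le x y <-> le (f x) (f y)).

Definition ACC (P : Poset) : Prop :=
  forall a : nat -> P, (forall n, le (a n) (a (S n))) ->
    exists N, forall m, N <= m -> a m = a N.

(* Main.v *)
Require Import Defs.
From Stdlib Require Import Classical Arith Lia ProofIrrelevance.
From mathcomp Require boolp classical_sets.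

Lemma zornP (T : Type) (R : T -> T -> Prop) :
  (forall t, R t t) -> (forall r s t, R r s -> R s t -> R r t) ->
  (forall s t, R s t -> R t s -> s = t) ->
  (forall A : T -> Prop, (forall s t, A s -> A t -> R s t \/ R t s) ->
     exists t, forall s, A s -> R s t) ->
  exists t, forall s, R t s -> s = t.
Proof.
  intros Hr Ht Ha Hc.
  destruct (@classical_sets.Zorn T (fun x y => boolp.asbool (R x y))) as [t Hm].
  - intro t; apply boolp.asboolT; auto.
  - intros r s t H1 H2; apply boolp.asboolT; apply boolp.asboolW in H1;
      apply boolp.asboolW in H2; eauto.
  - intros s t H1 H2; apply boolp.asboolW in H1; apply boolp.asboolW in H2; auto.
  - intros A HA. destruct (Hc A) as [t Ht'].
    + intros s t HAs HAt; destruct (HA s t HAs HAt) as [h|h];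
        apply boolp.asboolW in h; auto.
    + exists t; intros s Hs; apply boolp.asboolT; auto.
  - exists t; intros s Hs; apply Hm; apply boolp.asboolT; auto.
Qed.
Definition directed (P : Poset) (S D : P -> Prop) : Prop :=
  (forall d, D d -> S d) /\ (exists d, D d) /\
  (forall a b, D a -> D b -> exists c, D c /\ le a c /\ le b c).

Definition lub (P : Poset) (S D : P -> Prop) (z : P) : Prop :=
  S z /\ (forall d, D d -> le d z) /\
  (forall u, S u -> (forall d, D d -> le d u) -> le z u).

Definition compact (P : Poset) (S : P -> Prop) (x : P) : Prop :=
  S x /\ forall D z, directed P S D -> lub P S D z -> le x z ->
    exists d, D d /\ le x d.

Fixpoint K (P : Poset) (j : nat) : P -> Prop :=
  match j with 0 => fun _ => True | S j => compact P (K P j) end.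

Definition repf (P : Poset) (S : P -> Prop) (Q : Poset) (f : Q -> P) : Prop :=
  (forall a, S (f a)) /\ (forall x, S x -> exists a, f a = x) /\
  (forall a b, le a b <-> le (f a) (f b)).

Lemma pr_ideal (R : Poset) (r : R) : is_ideal R (fun x => le x r).
Proof.
  split; [exists r; apply le_refl|split].
  - intros x y Hxy Hy; eapply le_trans; eauto.
  - intros x y Hx Hy; exists r; repeat split; auto using le_refl.
Qed.

Definition pr (R : Poset) (r : R) : idP R :=
  exist (fun d => is_ideal R d) (fun x => le x r) (pr_ideal R r).

Lemma pr_le (R : Poset) (r s : R) : @le (idP R) (pr R r) (pr R s) <-> le r s.
Proof.
  simpl; unfold ideal_le; simpl; split.
  - intro H; apply H, le_refl.
  - intros H x Hx; eapply le_trans; eauto.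
Qed.

Lemma pr_le_I (R : Poset) (r : R) (I : idP R) :
  @le (idP R) (pr R r) I <-> proj1_sig I r.
Proof.
  destruct I as [I [Hne [Hdown Hdir]]]; simpl; unfold ideal_le; simpl; split.
  - intro H; apply H, le_refl.
  - intros H x Hx; eauto.
Qed.

Lemma union_lub (P R : Poset) (S : P -> Prop) (f : idP R -> P) (D : P -> Prop) :
  repf P S (idP R) f -> directed P S D ->
  exists Z : idP R, lub P S D (f Z) /\
    (forall x, proj1_sig Z x <-> exists I, D (f I) /\ proj1_sig I x).
Proof.
  intros [Hs [Hsurj Hord]] [HDS [[d0 Hd0] HDdir]].
  set (U := fun x : R => exists I : idP R, D (f I) /\ proj1_sig I x).
  assert (HU : is_ideal R U).
  { split; [|split].
    - destruct (Hsurj d0 (HDS d0 Hd0)) as [I HI]; subst d0.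
      destruct I as [I [[x Hx] HI2]]; exists x; exists (exist _ I (conj (ex_intro _ x Hx) HI2)); auto.
    - intros x y Hxy [I [HI Hy]]; exists I; split; auto.
      destruct I as [I [? [Hdown ?]]]; simpl in *; eauto.
    - intros x y [I1 [HI1 Hx]] [I2 [HI2 Hy]].
      destruct (HDdir _ _ HI1 HI2) as [c [Hc [H1 H2]]].
      destruct (Hsurj c (HDS c Hc)) as [J HJ]; subst c.
      apply Hord in H1; apply Hord in H2.
      simpl in H1, H2; unfold ideal_le in H1, H2.
      pose proof (H1 x Hx) as Jx; pose proof (H2 y Hy) as Jy.
      destruct J as [J [Je [Ja Jdir]]]; simpl in *.
      destruct (Jdir x y Jx Jy) as [z [Jz [Hxz Hyz]]].
      exists z; split; auto.
      exists (exist _ J (conj Je (conj Ja Jdir))); simpl; auto. }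
  exists (exist _ U HU); split; [split; [|split]|].
  - apply Hs.
  - intros d Hd. destruct (Hsurj d (HDS d Hd)) as [I HI]; subst d.
    apply Hord; simpl; unfold ideal_le; simpl; intros x Hx; exists I; auto.
  - intros u Su Hub. destruct (Hsurj u Su) as [J HJ]; subst u.
    apply Hord; simpl; unfold ideal_le; simpl.
    intros x [I [HI Hx]]. pose proof (Hub _ HI) as H. apply Hord in H.
    apply H; auto.
  - simpl; unfold U; tauto.
Qed.

Lemma lub_le (P : Poset) (S D : P -> Prop) (z u : P) :
  lub P S D z -> lub P S D u -> le z u.
Proof. intros [? [? ?]] [? [? ?]]; auto. Qed.

Lemma peel (P R : Poset) (S : P -> Prop) (f : idP R -> P) :
  repf P S (idP R) f -> repf P (compact P S) R (fun r => f (pr R r)).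
Proof.
  intros Hrep. pose proof Hrep as [Hs [Hsurj Hord]].
  split; [|split].
  - intro r; split; [apply Hs|].
    intros D z HD Hlub Hle.
    destruct (union_lub P R S f D Hrep HD) as [Z [HZ HZc]].
    assert (H1 : le (f (pr R r)) (f Z)) by (eapply le_trans; [exact Hle| eapply lub_le; eauto]).
    apply Hord, pr_le_I, HZc in H1. destruct H1 as [I [HI Ir]].
    exists (f I); split; auto. apply Hord, pr_le_I; auto.
  - intros x [Sx Hc].
    destruct (Hsurj x Sx) as [I HI]; subst x.
    set (D := fun d => exists r, proj1_sig I r /\ d = f (pr R r)).
    assert (HD : directed P S D).
    { split; [|split].
      - intros d [r [_ ->]]; apply Hs.
      - destruct I as [I [[r Hr] ?]]; exists (f (pr R r)); exists r; auto.
      - intros a b [r1 [H1 ->]] [r2 [H2 ->]].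
        destruct I as [I [? [? Idir]]]; simpl in *.
        destruct (Idir _ _ H1 H2) as [z [Hz [Hz1 Hz2]]].
        exists (f (pr R z)); split; [exists z; auto|].
        split; apply Hord, pr_le; auto. }
    assert (Hlub : lub P S D (f I)).
    { split; [apply Hs|split].
      - intros d [r [Hr ->]]. apply Hord, pr_le_I; auto.
      - intros u Su Hub. destruct (Hsurj u Su) as [J HJ]; subst u.
        apply Hord; simpl; unfold ideal_le; intros r Hr.
        apply (proj1 (pr_le_I R r J)). apply Hord, Hub. exists r; auto. }
    destruct (Hc D (f I) HD Hlub (le_refl _ _)) as [d [[r [Hr ->]] Hle]].
    exists r. f_equal. apply (le_antisym (idP R)).
    + apply pr_le_I; auto.
    + apply Hord; auto.
  - intros a b; rewrite <- Hord; symmetry; apply pr_le.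
Qed.

Lemma dcpo (P R : Poset) (S : P -> Prop) (f : idP R -> P) (D : P -> Prop) :
  repf P S (idP R) f -> directed P S D -> exists z, lub P S D z.
Proof.
  intros H1 H2; destruct (union_lub P R S f D H1 H2) as [Z [HZ _]]; eauto.
Qed.

Lemma algebraic (P R : Poset) (S : P -> Prop) (f : idP R -> P) (y : P) :
  repf P S (idP R) f -> S y ->
  directed P (compact P S) (fun d => compact P S d /\ le d y) /\
  lub P S (fun d => compact P S d /\ le d y) y.
Proof.
  intros Hrep Sy. pose proof Hrep as [Hs [Hsurj Hord]].
  pose proof (peel P R S f Hrep) as [Hc [Hcsurj Hcord]].
  destruct (Hsurj y Sy) as [I HI]; subst y.
  assert (Hmem : forall d, compact P S d /\ le d (f I) ->
             exists r, proj1_sig I r /\ d = f (pr R r)).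
  { intros d [Cd Hd]. destruct (Hcsurj d Cd) as [r Hr]; subst d.
    exists r; split; auto. apply Hord, pr_le_I in Hd; auto. }
  split; [split; [|split]|split; [apply Hs|split]].
  - intros d [? ?]; auto.
  - destruct I as [I [[r Hr] ?]]; exists (f (pr R r)); split; [apply Hc|].
    apply Hord, pr_le_I; auto.
  - intros a b Ha Hb.
    destruct (Hmem a Ha) as [r1 [H1 ->]]; destruct (Hmem b Hb) as [r2 [H2 ->]].
    destruct I as [I [? [? Idir]]]; simpl in *.
    destruct (Idir _ _ H1 H2) as [z [Hz [Hz1 Hz2]]].
    exists (f (pr R z)); split; [split; [apply Hc|]|].
    + apply Hord, pr_le_I; auto.
    + split; apply Hord, pr_le; auto.
  - intros d [? ?]; auto.
  - intros u Su Hub. destruct (Hsurj u Su) as [J HJ]; subst u.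
    apply Hord; simpl; unfold ideal_le; intros r Hr.
    apply (proj1 (pr_le_I R r J)). apply Hord, Hub. split; [apply Hc|].
    apply Hord, pr_le_I; auto.
Qed.

Lemma iter_add (a b : nat) (Q : Poset) : id_iter (a + b) Q = id_iter a (id_iter b Q).
Proof. induction a; simpl; [reflexivity| rewrite IHa; reflexivity]. Qed.

Lemma tower (P : Poset) : forall k m Q f, repf P (K P m) (id_iter k Q) f ->
  exists g, repf P (K P (m + k)) Q g.
Proof.
  induction k; intros m Q f H.
  - rewrite Nat.add_0_r; eauto.
  - pose proof (peel P (id_iter k Q) (K P m) f H) as H1.
    destruct (IHk (S m) Q _ H1) as [g Hg].
    replace (m + S k) with (S m + k) by lia; eauto.
Qed.

Lemma level (P : Poset) :
  (forall n : nat, exists Pn : Poset, order_iso P (id_iter n Pn)) ->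
  forall j, exists R f, repf P (K P j) (idP (idP R)) f.
Proof.
  intros H j. destruct (H (j + 2)) as [Q HQ].
  rewrite (iter_add j 2 Q) in HQ. destruct HQ as [f [g [Hgf [Hfg Hord]]]].
  assert (Hr : repf P (K P 0) (id_iter j (idP (idP Q))) g).
  { split; [|split].
    - intros; exact I.
    - intros x _; exists (f x); auto.
    - intros a b; rewrite Hord, !Hfg; tauto. }
  destruct (tower P j 0 _ g Hr) as [h Hh]. exists Q, h; exact Hh.
Qed.

Lemma lub_compact_in (P : Poset) (S D : P -> Prop) (z : P) :
  compact P S z -> directed P S D -> lub P S D z -> exists d, D d /\ le z d.
Proof. intros [_ Hc] HD Hl; apply (Hc D z HD Hl (le_refl _ _)). Qed.

Lemma first_fail (P : Poset) (m : P) : forall j, ~ K P j m ->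
  exists l, K P l m /\ ~ K P (S l) m.
Proof.
  induction j; intro H.
  - exfalso; apply H; exact I.
  - destruct (classic (K P j m)) as [Hk|Hk]; eauto.
Qed.

Lemma step (P : Poset) :
  (forall n : nat, exists Pn : Poset, order_iso P (id_iter n Pn)) ->
  forall m : P, (exists j, ~ K P j m) ->
  exists y, le m y /\ y <> m /\ exists j, ~ K P j y.
Proof.
  intros H m [j Hj].
  destruct (first_fail P m j Hj) as [l [Hl Hnl]].
  destruct (level P H l) as [R [f Hf]].
  pose proof (peel P (idP R) (K P l) f Hf) as Hg.
  destruct (algebraic P (idP R) (K P l) f m Hf Hl) as [HD Hlub].
  destruct (dcpo P R (K P (S l)) _ _ Hg HD) as [y Hy].
  exists y. pose proof Hy as [Ky [Hyub _]].
  assert (Hmy : le m y).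
  { destruct Hlub as [_ [_ Hleast]]. apply Hleast; [exact (proj1 Ky)| exact Hyub]. }
  split; [exact Hmy|split].
  - intro E; subst y; contradiction.
  - exists (S (S l)); intro Hc.
    destruct (lub_compact_in P _ _ y Hc HD Hy) as [d [[_ Hdm] Hyd]].
    apply Hnl. assert (y = m) as <- by
      (apply le_antisym; [eapply le_trans; eauto | exact Hmy]).
    exact Ky.
Qed.

Theorem theorem4p2 (P0 : Poset) :
  (forall n : nat, exists Pn : Poset, order_iso P0 (id_iter n Pn)) ->
  ACC P0.
Proof.
  intros H a Hinc. apply NNPP; intro Hn.
  assert (Hmono : forall i j, i <= j -> le (a i) (a j)).
  { intros i j Hij; induction Hij; [apply le_refl| eapply le_trans; eauto]. }
  destruct (level P0 H 0) as [R0 [f0 Hf0]].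
  pose proof (peel P0 (idP R0) (K P0 0) f0 Hf0) as Hg0.
  assert (Hdc : forall D, directed P0 (K P0 0) D -> exists z, lub P0 (K P0 0) D z)
    by (intros D HD; eapply dcpo; eauto).
  assert (Hz0 : exists z0 : P0, exists j, ~ K P0 j z0).
  { set (D := fun x => exists k, x = a k).
    assert (HD : directed P0 (K P0 0) D).
    { split; [intros; exact I|split; [exists (a 0), 0; auto|]].
      intros x y [i ->] [k ->]. exists (a (max i k)); split; [exists (max i k); auto|].
      split; apply Hmono; lia. }
    destruct (Hdc D HD) as [z Hz]. exists z, 1; intro Hc.
    destruct (lub_compact_in P0 _ _ z Hc HD Hz) as [d [[k ->] Hzk]].
    apply Hn; exists k; intros m Hm.
    apply le_antisym; [|apply Hmono; auto].
    eapply le_trans; [|exact Hzk]. destruct Hz as [_ [Hub _]]. apply Hub; exists m; auto. }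
  destruct Hz0 as [z0 Hz0].
  set (T := {x : P0 | exists j, ~ K P0 j x}).
  destruct (zornP T (fun s t => le (proj1_sig s) (proj1_sig t))) as [mx Hmx].
  - intros; apply le_refl.
  - intros; eapply le_trans; eauto.
  - intros [s Hs] [t Ht] H1 H2; simpl in *.
    assert (s = t) by (apply le_antisym; auto); subst t.
    f_equal; apply proof_irrelevance.
  - intros A Htot.
    destruct (classic (exists t, A t /\ forall s, A s -> le (proj1_sig s) (proj1_sig t)))
      as [[t [_ Ht]]|Hnomax]; [exists t; auto|].
    destruct (classic (exists t, A t)) as [[t0 Ht0]|Hemp].
    + set (D := fun x => exists s, A s /\ proj1_sig s = x).
      assert (HD : directed P0 (K P0 0) D).
      { split; [intros; exact I|split; [exists (proj1_sig t0), t0; auto|]].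
        intros x y [s1 [H1 <-]] [s2 [H2 <-]].
        destruct (Htot s1 s2 H1 H2) as [h|h].
        - exists (proj1_sig s2); split; [exists s2; auto|split; auto using le_refl].
        - exists (proj1_sig s1); split; [exists s1; auto|split; auto using le_refl]. }
      destruct (Hdc D HD) as [z Hz].
      assert (Zz : exists j, ~ K P0 j z).
      { exists 1; intro Hc.
        destruct (lub_compact_in P0 _ _ z Hc HD Hz) as [d [[s [Hs <-]] Hzs]].
        apply Hnomax; exists s; split; auto.
        intros s' Hs'. eapply le_trans; [|exact Hzs].
        destruct Hz as [_ [Hub _]]. apply Hub; exists s'; auto. }
      exists (exist _ z Zz); simpl. intros s Hs.
      destruct Hz as [_ [Hub _]]. apply Hub; exists s; auto.
    + exists (exist _ z0 Hz0); intros s Hs; exfalso; apply Hemp; eauto.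
  - destruct mx as [m Zm].
    destruct (step P0 H m Zm) as [y [Hmy [Hne Zy]]].
    pose proof (Hmx (exist _ y Zy) Hmy) as E.
    apply Hne. exact (f_equal (@proj1_sig _ _) E).
Qed.
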